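(* Let $G, H$ be finite groups, and consider the bijective Version I pebble game on $(G,H)$. Suppose that at some round Duplicator selects a bijection $f : G \to H$ such that $|C_{G}(x)| \neq |C_{H}(f(x))|$ for some $x \in G$. Then Spoiler can win using $3$ pebble pairs within $3$ rounds.
   Context: $C_G(x)$ denotes the centralizer of $x$ in $G$. Bijective Version I pebble game on finite groups $G,H$: if $|G|\ne|H|$ Spoiler wins at once. Each round: Spoiler picks up a pebble pair $(p_i,p_i')$; the winning condition is checked; Duplicator chooses a bijection $f:G\to H$; Spoiler places $p_i$ on some $g\in G$ and $p_i'$ is placed on $f(g)$. Spoiler wins when, with $g_1,\ldots,g_\ell\in G$ and $h_1,\ldots,h_\ell \in H$ the corresponding pebbled elements, the map $g_i\mapsto h_i$ is not a marked equivalence, i.e. it is not the case that for all $i,j,t$: $g_i=g_j\iff h_i=h_j$ and $g_ig_j=g_t\iff h_ih_j=h_t$. *)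

(* Defs.v *)
From mathcomp Require Import all_boot all_fingroup.
Set Implicit Arguments. Unset Strict Implicit. Unset Printing Implicit Defensive.

(* Finite groups G, H are modelled as finGroupTypes gT, hT (the whole type is
   the group).  A board with k pebble pairs p_0..p_{k-1}: pebble pair j is
   either off the board (None) or placed on (g_j, h_j) (Some (g_j, h_j)). *)
Definition config (gT hT : finGroupType) (k : nat) := 'I_k -> option (gT * hT).

Definition marked_equiv (gT hT : finGroupType) (k : nat) (c : config gT hT k) : Prop :=
  forall (i j t : 'I_k) (a b d : gT * hT),
    c i = Some a -> c j = Some b -> c t = Some d ->
    (a.1 = b.1 <-> a.2 = b.2) /\
    ((a.1 * b.1)%g = d.1 <-> (a.2 * b.2)%g = d.2).

Definition place (gT hT : finGroupType) (k : nat) (c : config gT hT k)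
  (i : 'I_k) (p : gT * hT) : config gT hT k :=
  fun j => if j == i then Some p else c j.

(* spoiler_wins r c : from board c (just after a placement), Spoiler can force
   a win within r further rounds of the bijective Version I game. *)
Fixpoint spoiler_wins (gT hT : finGroupType) (k : nat) (r : nat)
  (c : config gT hT k) : Prop :=
  ~ marked_equiv c \/
  match r with
  | 0 => False
  | r'.+1 =>
      exists i : 'I_k, forall f : gT -> hT, bijective f ->
        exists g : gT, spoiler_wins r' (place c i (g, f g))
  end.

(* Main.v *)
Require Import Defs.
From mathcomp Require Import all_boot all_fingroup.

Lemma key (gT hT : finGroupType) (f : gT -> hT) (x : gT)
  (hx : #|('C[x])%g| <> #|('C[f x])%g|) (f' : gT -> hT) (bf : bijective f') :
  exists g : gT, ((g * x)%g == (x * g)%g) != ((f' g * f x)%g == (f x * f' g)%g).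
Proof.
suff: [exists g, ((g * x)%g == (x * g)%g) != ((f' g * f x)%g == (f x * f' g)%g)] by move/existsP.
apply: contraT => /existsPn H; exfalso; apply: hx.
have E : f' @^-1: 'C[f x]%g = 'C[x]%g.
  apply/setP => g; rewrite inE !cent1E.
  by have := H g; rewrite negbK => /eqP ->.
rewrite -E on_card_preimset //.
exact: onW_bij.
Qed.

Lemma three_idx (k : nat) (hk : 3 <= k) (i : 'I_k) :
  exists j t : 'I_k, [/\ j != i, t != i & t != j].
Proof.
have h0 : 0 < k by apply: leq_trans hk.
have h1 : 1 < k by apply: leq_trans hk.
have h2 : 2 < k by [].
pose o0 := Ordinal h0; pose o1 := Ordinal h1; pose o2 := Ordinal h2.
case: (eqVneq (val i) 0) => [E0|N0].
  exists o1, o2; split; apply/eqP => /(congr1 val) /=; rewrite ?E0 //.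
case: (eqVneq (val i) 1) => [E1|N1].
  exists o0, o2; split; apply/eqP => /(congr1 val) /=; rewrite ?E1 //.
exists o0, o1; split; apply/eqP => /(congr1 val) /= => E.
- by move: N0; rewrite -[val i]/(nat_of_ord i) -E.
- by move: N1; rewrite -[val i]/(nat_of_ord i) -E.
- by [].
Qed.

Theorem lemma4p13 (gT hT : finGroupType) (k : nat) (hk : 3 <= k)
  (c : config gT hT k) (i : 'I_k) (f : gT -> hT) (bij_f : bijective f)
  (x : gT) (hx : #|('C[x])%g| <> #|('C[f x])%g|) :
  exists g : gT, spoiler_wins 2 (place c i (g, f g)).
Proof.
have [j [t [ji ti tj]]] := @three_idx k hk i.
exists x; right; exists j => f' bf'.
have [g Hg] := @key _ _ f x hx f' bf'.
exists g; right; exists t => f'' bf''.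
exists (x * g)%g; left => M.
set c3 := place _ _ _ in M.
have ci : c3 i = Some (x, f x).
  by rewrite /c3 /place (eq_sym i t) (negbTE ti) (eq_sym i j) (negbTE ji) eqxx.
have cj : c3 j = Some (g, f' g).
  by rewrite /c3 /place (eq_sym j t) (negbTE tj) eqxx.
have ct : c3 t = Some (x * g, f'' (x * g))%g.
  by rewrite /c3 /place eqxx.
have [_ [A _]] := M i j t _ _ _ ci cj ct.
have [_ B] := M j i t _ _ _ cj ci ct.
have A' := A erefl; simpl in A, A', B.
rewrite -A' in B.
move: Hg; case: (eqVneq (g * x)%g (x * g)%g) => e1; case: (eqVneq (f' g * f x)%g (f x * f' g)%g) => e2 //= _.
- by move/eqP: e2; apply; apply/(proj1 B).
- by move/eqP: e1; apply; apply/(proj2 B).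
Qed.
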